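(* Let $n\ge 1$ and let $a_1,\dots,a_n\ge 2$ be integers. Let $\mathbb{E}=(a_i\delta_{i,j}+\delta_{i+1,j})_{i,j=1}^n$ (the upper bidiagonal $n\times n$ matrix with diagonal $a_1,\dots,a_n$ and all superdiagonal entries $1$). For $\mathbf{k}=(k_1,\dots,k_n)\in\mathbb{Z}^n$ define rational numbers $\omega^{(n)}_{\mathbf{k},1},\dots,\omega^{(n)}_{\mathbf{k},n}$ by $$(\omega^{(n)}_{\mathbf{k},1},\dots,\omega^{(n)}_{\mathbf{k},n}):=(k_1+1,\dots,k_n+1)\,\mathbb{E}^{-T},$$ where $\mathbb{E}^{-T}=(\mathbb{E}^{-1})^T$. Then for every $\mathbf{k}$ with $0\le k_i\le a_i-1$ for $i=1,\dots,n-1$ and $0\le k_n\le a_n-2$, one has $0<\omega^{(n)}_{\mathbf{k},i}<1$ for all $i=1,\dots,n$. Moreover, setting $\mathbf{k}^\ast:=(a_1-1,\dots,a_{n-1}-1,a_n-2)-\mathbf{k}$, one has $$\omega^{(n)}_{\mathbf{k}^\ast,i}=1-\omega^{(n)}_{\mathbf{k},i},\qquad i=1,\dots,n.$$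
   Context: $\mathbb{E}$ is the exponent matrix of the chain-type polynomial $f_n=z_1^{a_1}z_2+z_2^{a_2}z_3+\cdots+z_{n-1}^{a_{n-1}}z_n+z_n^{a_n}$. *)

(* Defs.v *)
From HB Require Import structures.
From mathcomp Require Import all_boot all_order all_algebra.
Set Implicit Arguments. Unset Strict Implicit. Unset Printing Implicit Defensive.
Import Order.TTheory GRing.Theory Num.Theory.
Local Open Scope ring_scope.

(* Exponent matrix of the chain polynomial: E_{ij} = a_i delta_{ij} + delta_{i+1,j}
   (0-based indices here). *)
Definition chainE (n : nat) (a : 'I_n -> int) : 'M[rat]_n :=
  \matrix_(i, j) ((a i)%:~R * (i == j)%:R + ((val i).+1 == val j)%:R).

Definition omega (n : nat) (a : 'I_n -> int) (k : 'I_n -> int) : 'rV[rat]_n :=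
  (\row_i ((k i)%:~R + 1)) *m (invmx (chainE a))^T.

Definition kstar (n : nat) (a : 'I_n -> int) (k : 'I_n -> int) : 'I_n -> int :=
  fun i => (if val i == n.-1 then a i - 2 else a i - 1) - k i.

(* Main.v *)
Require Import Defs.
From HB Require Import structures.
From mathcomp Require Import all_boot all_order all_algebra.
From mathcomp Require Import ring lra zify.
Import Order.TTheory GRing.Theory Num.Theory.
Local Open Scope ring_scope.

Section Aux.
Variables (n : nat) (a : 'I_n -> int).
Hypothesis Ha : forall i, 2 <= a i.

Lemma unitE : chainE a \in unitmx.
Proof.
rewrite unitmxE -det_tr det_trig; last first.
  apply/is_trig_mxP => i j lij; rewrite !mxE.
  have -> : (j == i) = false by apply/negbTE; rewrite neq_ltn lij orbT.
  have -> : ((val j).+1 == val i) = false.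
    by apply/negbTE; rewrite neq_ltn; apply/orP; right; apply: (ltn_trans lij).
  by rewrite mulr0 add0r.
rewrite unitfE prodf_seq_neq0; apply/allP => i _ /=.
rewrite !mxE eqxx mulr1.
have -> : ((val i).+1 == val i) = false by apply/negbTE; rewrite gtn_eqF.
rewrite addr0 intr_eq0; apply/negP => /eqP H; have := Ha i; by rewrite H.
Qed.

Lemma mulE (x : 'rV[rat]_n) (j : 'I_n) :
  (x *m (chainE a)^T) 0 j = (a j)%:~R * x 0 j +
     (if (j.+1 < n)%N then x 0 (insubd j j.+1) else 0).
Proof.
rewrite !mxE.
under eq_bigr => i _ do rewrite !mxE mulrDr.
rewrite big_split /= (bigD1 j) //= big1 ?addr0; last first.
  by move=> i /negbTE; rewrite eq_sym => ->; rewrite mulr0 mulr0.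
rewrite eqxx mulr1 mulrC; congr (_ + _).
case: ifP => hj.
  rewrite (bigD1 (insubd j j.+1)) //= val_insubd hj eqxx mulr1 big1 ?addr0 //.
  move=> i hi; have -> : ((val j).+1 == val i) = false.
    apply/negbTE; apply: contra hi => /eqP e; apply/eqP/val_inj.
    by rewrite /= val_insubd hj e.
  by rewrite mulr0.
rewrite big1 // => i _.
have -> : ((val j).+1 == val i) = false.
  by apply/negbTE; apply/eqP => e; move: (ltn_ord i); rewrite -e hj.
by rewrite mulr0.
Qed.

Lemma omegaE (k : 'I_n -> int) :
  omega a k *m (chainE a)^T = \row_i ((k i)%:~R + 1).
Proof.
rewrite /omega -mulmxA -trmx_mul mulmxV ?unitE // trmx1 mulmx1 //.
Qed.

Lemma omega_uniq (k : 'I_n -> int) (v : 'rV[rat]_n) :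
  v *m (chainE a)^T = \row_i ((k i)%:~R + 1) -> omega a k = v.
Proof.
move=> h; rewrite /omega -h -mulmxA -trmx_mul mulVmx ?unitE // trmx1 mulmx1 //.
Qed.
End Aux.

Theorem proposition2p12 (n : nat) (a k : 'I_n -> int) :
  (1 <= n)%N ->
  (forall i, 2 <= a i) ->
  (forall i, (val i < n.-1)%N -> 0 <= k i <= a i - 1) ->
  (forall i, val i = n.-1 -> 0 <= k i <= a i - 2) ->
  (forall i, 0 < omega a k 0 i < 1) /\
  (forall i, omega a (kstar a k) 0 i = 1 - omega a k 0 i).
Proof.
move=> n1 Ha Hk1 Hk2.
set w := omega a k.
have eqw j : (a j)%:~R * w 0 j + (if (j.+1 < n)%N then w 0 (insubd j j.+1) else 0)
     = (k j)%:~R + 1.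
  by rewrite -mulE /w (@omegaE _ _ Ha k) mxE.
split.
  suff H : forall d (j : 'I_n), (n.-1 - j <= d)%N -> 0 < w 0 j < 1.
    by move=> j; apply: (H n.-1); rewrite leq_subr.
  elim => [|d IH] j hj.
    have ej : nat_of_ord j = n.-1.
      by move: (ltn_ord j) hj n1; rewrite -!subn1; lia.
    have := eqw j; rewrite ej prednK // ltnn addr0 => e.
    have /andP [h1 h2] := Hk2 j ej.
    have A2 : (2 : rat) <= (a j)%:~R by rewrite (_ : 2 = (2:int)%:~R) // ler_int.
    have K0 : (0 : rat) <= (k j)%:~R by rewrite ler0z.
    have K1 : ((k j)%:~R : rat) <= ((a j - 2)%:~R) by rewrite ler_int.
    rewrite rmorphB /= in K1.
    apply/andP; split; nra.
  case: (leqP (n.-1 - j) d) => hd; first exact: IH.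
  have hjn : (j.+1 < n)%N by move: (ltn_ord j) hd; (rewrite -?subn1; lia).
  have := eqw j; rewrite hjn => e.
  have /andP [w1 w2] : 0 < w 0 (insubd j j.+1) < 1.
    apply: IH; rewrite val_insubd hjn. move: hj hd. rewrite -?subn1. lia.
  have hj1 : (nat_of_ord j < n.-1)%N by move: hjn; rewrite -?subn1; lia.
  have /andP [h1 h2] := Hk1 j hj1.
  have A2 : (2 : rat) <= (a j)%:~R by rewrite (_ : 2 = (2:int)%:~R) // ler_int.
  have K0 : (0 : rat) <= (k j)%:~R by rewrite ler0z.
  have K1 : ((k j)%:~R : rat) <= ((a j - 1)%:~R) by rewrite ler_int.
  rewrite rmorphB /= in K1.
  apply/andP; split; nra.
move=> i.
suff -> : omega a (kstar a k) = const_mx 1 - w by rewrite !mxE.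
apply: omega_uniq => //; apply/rowP => j.
rewrite mulE // !mxE.
have := eqw j.
rewrite /kstar.
case: ifP => hjn.
  have ne : nat_of_ord j != n.-1 by move: hjn; (rewrite -?subn1; lia).
  rewrite (negbTE ne) !mxE => e.
  rewrite rmorphB rmorphB /=; lra.
have ej : nat_of_ord j == n.-1 by move: hjn (ltn_ord j); (rewrite -?subn1; lia).
rewrite (_ : (val j == n.-1) = true) // !mxE => e.
rewrite rmorphB rmorphB /=; lra.
Qed.
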